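(* Let $(\lambda_k),(x_k),(y_k)$ be generated by the acceleration framework (context) up to $K$ for convex differentiable $g$ with minimizer $x^*$, $g^*=g(x^* )$, and suppose $\delta\le c\sqrt{1-\sigma}\,\|x^*\|/A_K$ for some $c\ge0$. Then $\delta_k\le c(1+3c)\|x^*\|^2$ for all $k\in[K]$, where $\delta_k=\delta\sum_{i\in[k]}a_i\|x_i-x^*\|+\frac{\delta^2}{2(1-\sigma)}\sum_{i\in[k]}a_i^2$. Consequently, if $c\le\frac14$ then for all $k\in[K]$, \[ A_k[g(y_k)-g^*]+\frac12\|x_k-x^*\|^2+\sum_{i\in[k]}\frac{(1-\sigma)A_i}{2\lambda_i}\|y_i-\tilde x_{i-1}\|^2\le\|x^*\|^2. \] In particular, if $\delta\le\frac{\|x^*\|}{\mu A_K}$ with $\mu=\frac{4\sqrt2}{\sqrt{1-\sigma}}$, then $\|x_k-x^*\|\le2\|x^*\|$ for all $k\in[K]$, and for every $\epsilon>0$ either $g(y_k)\le g^*+\epsilon$ or $A_k\le\|x^*\|^2/\epsilon$.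
   Context: Acceleration framework: let $g:\mathbb{R}^d\to\mathbb{R}$ be convex and differentiable, $\sigma\in(0,1)$, $\delta\ge0$, $K\ge1$. Sequences $(\lambda_k)_{k=1}^K\subset(0,\infty)$ and $(x_k)_{k=0}^K,(y_k)_{k=0}^K\subset\mathbb{R}^d$ are generated by the framework if $x_0=y_0=0$, $A_0=0$, and for each $k=0,\dots,K-1$, with $a_{k+1}=\frac12\big[\lambda_{k+1}+\sqrt{\lambda_{k+1}^2+4\lambda_{k+1}A_k}\big]$, $A_{k+1}=A_k+a_{k+1}$, $\tilde x_k=\frac{A_k}{A_{k+1}}y_k+\frac{a_{k+1}}{A_{k+1}}x_k$, one has $\|\lambda_{k+1}\nabla g(y_{k+1})+y_{k+1}-\tilde x_k\|\le\sigma\|y_{k+1}-\tilde x_k\|+\lambda_{k+1}\delta$ and $\|x_{k+1}-(x_k-a_{k+1}\nabla g(y_{k+1}))\|\le a_{k+1}\delta$. (Note $\lambda_{k+1}A_{k+1}=a_{k+1}^2$.) *)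

(* Defs.v *)
From mathcomp Require Import ssreflect ssrfun ssrbool eqtype ssrnat seq fintype bigop.
From Stdlib Require Import Reals.
Open Scope R_scope.

Definition vec (d : nat) := 'I_d -> R.

Definition vzero {d} : vec d := fun _ => 0.
Definition vadd {d} (u v : vec d) : vec d := fun i => u i + v i.
Definition vsub {d} (u v : vec d) : vec d := fun i => u i - v i.
Definition vscale {d} (t : R) (u : vec d) : vec d := fun i => t * u i.

Definition dot {d} (u v : vec d) : R := \big[Rplus/0]_(i < d) (u i * v i).
Definition vnorm {d} (u : vec d) : R := sqrt (dot u u).

Definition convex {d} (g : vec d -> R) : Prop :=
  forall (u v : vec d) (t : R), 0 <= t -> t <= 1 ->
    g (vadd (vscale t u) (vscale (1 - t) v)) <= t * g u + (1 - t) * g v.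

Definition is_gradient {d} (g : vec d -> R) (G : vec d -> vec d) : Prop :=
  forall x : vec d, forall eps : R, 0 < eps -> exists eta : R, 0 < eta /\
    forall h : vec d, vnorm h < eta ->
      Rabs (g (vadd x h) - g x - dot (G x) h) <= eps * vnorm h.

Fixpoint sum1 (f : nat -> R) (k : nat) : R :=
  match k with
  | O => 0
  | S k' => sum1 f k' + f (S k')
  end.

(* a_{k+1} and A_k of the acceleration framework; lam k = lambda_k (k >= 1). *)
Fixpoint accA (lam : nat -> R) (k : nat) : R :=
  match k with
  | O => 0
  | S k' => accA lam k' +
      (lam (S k') + sqrt (lam (S k') ^ 2 + 4 * lam (S k') * accA lam k')) / 2
  end.

Definition acca (lam : nat -> R) (k : nat) : R :=
  match k with
  | O => 0
  | S k' => (lam (S k') + sqrt (lam (S k') ^ 2 + 4 * lam (S k') * accA lam k')) / 2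
  end.

Definition xtilde {d} (lam : nat -> R) (x y : nat -> vec d) (k : nat) : vec d :=
  vadd (vscale (accA lam k / accA lam (S k)) (y k))
       (vscale (acca lam (S k) / accA lam (S k)) (x k)).

Definition generated {d} (g : vec d -> R) (G : vec d -> vec d)
    (sigma delta : R) (K : nat) (lam : nat -> R) (x y : nat -> vec d) : Prop :=
  0 < sigma /\ sigma < 1 /\ 0 <= delta /\ (1 <= K)%nat /\
  (forall k, (1 <= k <= K)%nat -> 0 < lam k) /\
  x O = vzero /\ y O = vzero /\
  (forall k, (k < K)%nat ->
     vnorm (vadd (vscale (lam (S k)) (G (y (S k))))
                 (vsub (y (S k)) (xtilde lam x y k)))
       <= sigma * vnorm (vsub (y (S k)) (xtilde lam x y k)) + lam (S k) * delta /\
     vnorm (vsub (x (S k)) (vsub (x k) (vscale (acca lam (S k)) (G (y (S k))))))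
       <= acca lam (S k) * delta).

Definition delta_k {d} (sigma delta : R) (lam : nat -> R) (x : nat -> vec d)
    (xs : vec d) (k : nat) : R :=
  delta * sum1 (fun i => acca lam i * vnorm (vsub (x i) xs)) k
  + delta ^ 2 / (2 * (1 - sigma)) * sum1 (fun i => acca lam i ^ 2) k.

(* Main.v *)
Require Import Defs.
From mathcomp Require Import ssreflect ssrfun ssrbool eqtype ssrnat seq fintype bigop.
From Stdlib Require Import Reals.
Open Scope R_scope.
From mathcomp Require Import zify.
From Stdlib Require Import Lra Psatz FunctionalExtensionality.
Open Scope R_scope.

Section V.
Context {d : nat}.
Implicit Types u v w : vec d.

Lemma sum_lin (al be : R) (f h : 'I_d -> R) :
  \big[Rplus/0]_(i < d) (al * f i + be * h i) =
  al * \big[Rplus/0]_(i < d) f i + be * \big[Rplus/0]_(i < d) h i.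
Proof.
apply: (big_rec3 (fun a b c => a = al * b + be * c)) => [|i a b c _ ->]; ring.
Qed.

Lemma dot_ext u v w : (forall i, u i = v i) -> dot u w = dot v w.
Proof. move=> H; rewrite /dot; apply: eq_bigr => i _; by rewrite H. Qed.

Lemma dot_sym u v : dot u v = dot v u.
Proof. rewrite /dot; apply: eq_bigr => i _; ring. Qed.

Lemma dot_vadd_l u v w : dot (vadd u v) w = dot u w + dot v w.
Proof.
have := sum_lin 1 1 (fun i => u i * w i) (fun i => v i * w i).
rewrite /dot !Rmult_1_l => <-; apply: eq_bigr => i _; rewrite /vadd; ring.
Qed.

Lemma dot_vsub_l u v w : dot (vsub u v) w = dot u w - dot v w.
Proof.
have := sum_lin 1 (-1) (fun i => u i * w i) (fun i => v i * w i).
rewrite /dot => H.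
have -> : \big[Rplus/0]_(i < d) (u i * w i) - \big[Rplus/0]_(i < d) (v i * w i)
  = 1 * \big[Rplus/0]_(i < d) (u i * w i) + -1 * \big[Rplus/0]_(i < d) (v i * w i) by ring.
rewrite -H; apply: eq_bigr => i _; rewrite /vsub; ring.
Qed.

Lemma dot_vscale_l t u w : dot (vscale t u) w = t * dot u w.
Proof.
have := sum_lin t 0 (fun i => u i * w i) (fun i => u i * w i).
rewrite /dot Rmult_0_l Rplus_0_r => <-; apply: eq_bigr => i _; rewrite /vscale; ring.
Qed.

Lemma dot_vadd_r u v w : dot w (vadd u v) = dot w u + dot w v.
Proof. by rewrite dot_sym dot_vadd_l (dot_sym u) (dot_sym v). Qed.
Lemma dot_vsub_r u v w : dot w (vsub u v) = dot w u - dot w v.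
Proof. by rewrite dot_sym dot_vsub_l (dot_sym u) (dot_sym v). Qed.
Lemma dot_vscale_r t u w : dot w (vscale t u) = t * dot w u.
Proof. by rewrite dot_sym dot_vscale_l (dot_sym u). Qed.

Lemma dot_ge0 u : 0 <= dot u u.
Proof.
rewrite /dot; apply: (big_rec (fun a => 0 <= a)) => [|i a _ Ha]; first lra.
have := Rle_0_sqr (u i); rewrite /Rsqr; lra.
Qed.

Lemma vnorm_sq u : vnorm u ^ 2 = dot u u.
Proof. rewrite /vnorm pow2_sqrt //; exact: dot_ge0. Qed.

Lemma vnorm_ge0 u : 0 <= vnorm u.
Proof. exact: sqrt_pos. Qed.

Lemma CS u v : dot u v <= vnorm u * vnorm v.
Proof.
have key : forall t, 0 <= dot u u - 2 * t * dot u v + t ^ 2 * dot v v.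
  move=> t; have := dot_ge0 (vsub u (vscale t v)).
  rewrite !dot_vsub_l !dot_vsub_r !dot_vscale_l !dot_vscale_r (dot_sym v u); nra.
have Hn := Rmult_le_pos _ _ (vnorm_ge0 u) (vnorm_ge0 v).
case: (Rle_lt_dec (dot u v) 0) => Hb; first lra.
have Ha := dot_ge0 u; have Hc := dot_ge0 v.
case: (Rle_lt_or_eq_dec _ _ Hc) => Hc'.
- have := key (dot u v / dot v v).
  have -> : dot u u - 2 * (dot u v / dot v v) * dot u v +
    (dot u v / dot v v) ^ 2 * dot v v = (dot u u * dot v v - dot u v ^ 2) / dot v v
    by field; lra.
  move=> H.
  have H2 : dot u v ^ 2 <= dot u u * dot v v.
    have : 0 <= (dot u u * dot v v - dot u v ^ 2) / dot v v * dot v v by nra.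
    have -> : (dot u u * dot v v - dot u v ^ 2) / dot v v * dot v v
      = dot u u * dot v v - dot u v ^ 2 by field; lra.
    lra.
  rewrite /vnorm -sqrt_mult // -(sqrt_pow2 (dot u v)); last lra.
  exact: sqrt_le_1_alt.
- have := key ((dot u u + 1) / (2 * dot u v)).
  rewrite -Hc'.
  have -> : dot u u - 2 * ((dot u u + 1) / (2 * dot u v)) * dot u v +
    ((dot u u + 1) / (2 * dot u v)) ^ 2 * 0 = -1 by field; lra.
  lra.
Qed.

Lemma vnorm_scale t u : vnorm (vscale t u) = Rabs t * vnorm u.
Proof.
rewrite /vnorm dot_vscale_l dot_vscale_r -Rmult_assoc sqrt_mult.
- by rewrite -sqrt_Rsqr_abs.
- have := Rle_0_sqr t; rewrite /Rsqr; lra.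
- exact: dot_ge0.
Qed.

End V.

Lemma grad_ineq d (g : vec d -> R) G : convex g -> is_gradient g G ->
  forall u w, g w + dot (G w) (vsub u w) <= g u.
Proof.
move=> Hc Hg u w; set h := vsub u w.
case: (Rle_lt_dec (g w + dot (G w) h) (g u)) => // Hgap; exfalso.
set gap := g w + dot (G w) h - g u.
have Hn := vnorm_ge0 h.
have Hg0 : 0 < gap by rewrite /gap; lra.
set eps := gap / (vnorm h + 1).
have Heps : 0 < eps by rewrite /eps; apply: Rdiv_lt_0_compat; lra.
have Hepsn : eps * vnorm h < gap.
  rewrite /eps. have -> : gap / (vnorm h + 1) * vnorm h = gap * (vnorm h / (vnorm h + 1)) by field; lra.
  have : vnorm h / (vnorm h + 1) < 1.
    apply/(Rmult_lt_reg_r (vnorm h + 1)); first lra.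
    have -> : vnorm h / (vnorm h + 1) * (vnorm h + 1) = vnorm h by field; lra.
    lra.
  move=> H; have : 0 <= vnorm h / (vnorm h + 1).
    apply: Rmult_le_pos => //; apply: Rlt_le; apply: Rinv_0_lt_compat; lra.
  nra.
case: (Hg w eps Heps) => eta [Heta Hh].
set t := Rmin 1 (eta / (2 * (vnorm h + 1))).
have Ht0 : 0 < t.
  apply: Rmin_pos; first lra; apply: Rdiv_lt_0_compat; lra.
have Ht1 : t <= 1 by apply: Rmin_l.
have Ht2 : t <= eta / (2 * (vnorm h + 1)) by apply: Rmin_r.
have Hth : vnorm (vscale t h) < eta.
  rewrite vnorm_scale Rabs_pos_eq; last lra.
  have : eta / (2 * (vnorm h + 1)) * vnorm h < eta.
    have -> : eta / (2 * (vnorm h + 1)) * vnorm h = eta * (vnorm h / (2 * (vnorm h + 1))) by field; lra.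
    have : vnorm h / (2 * (vnorm h + 1)) < 1.
      apply/(Rmult_lt_reg_r (2 * (vnorm h + 1))); first lra.
      have -> : vnorm h / (2 * (vnorm h + 1)) * (2 * (vnorm h + 1)) = vnorm h by field; lra.
      lra.
    nra.
  nra.
have H1 := Hh _ Hth.
rewrite vnorm_scale (Rabs_pos_eq t) in H1; last lra.
rewrite dot_vscale_r in H1.
have Hc1 := Hc u w t (Rlt_le _ _ Ht0) Ht1.
have Eq : vadd (vscale t u) (vscale (1 - t) w) = vadd w (vscale t h).
  apply: functional_extensionality => i; rewrite /vadd /vscale /h /vsub; ring.
rewrite Eq in Hc1.
have H2 := Rle_trans _ _ _ (Rle_abs _) (Rle_trans _ _ _ (Req_le _ _ (Rabs_Ropp _)) H1).
have : t * (g u - g w - dot (G w) h + eps * vnorm h) >= 0 by nra.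
rewrite /gap in Hepsn Hg0; nra.
Qed.

Lemma step d (g : vec d -> R) (G : vec d -> vec d) (sigma delta A a lam : R)
  (x y x' y' xs : vec d) :
  (forall u w, g w + dot (G w) (vsub u w) <= g u) ->
  0 < sigma -> sigma < 1 -> 0 <= delta -> 0 <= A -> 0 < lam -> 0 < a ->
  lam * (A + a) = a ^ 2 ->
  vnorm (vadd (vscale lam (G y'))
     (vsub y' (vadd (vscale (A / (A + a)) y) (vscale (a / (A + a)) x))))
   <= sigma * vnorm (vsub y' (vadd (vscale (A / (A + a)) y) (vscale (a / (A + a)) x)))
      + lam * delta ->
  vnorm (vsub x' (vsub x (vscale a (G y')))) <= a * delta ->
  (A + a) * (g y' - g xs) + 1 / 2 * vnorm (vsub x' xs) ^ 2
  + (1 - sigma) * (A + a) / (2 * lam)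
      * vnorm (vsub y' (vadd (vscale (A / (A + a)) y) (vscale (a / (A + a)) x))) ^ 2
  <= A * (g y - g xs) + 1 / 2 * vnorm (vsub x xs) ^ 2
     + delta * (a * vnorm (vsub x' xs)) + delta ^ 2 / (2 * (1 - sigma)) * a ^ 2.
Proof.
move=> Hgr Hs0 Hs1 Hd HA Hl Ha Hrel.
set v := G y'.
set p := vsub y' _.
set q := vsub x' xs.
set e := vsub x' (vsub x (vscale a v)).
set r := vsub x xs.
set w := vsub x' x.
move=> E1 E2.
have Hc1 := Hgr y y'. have Hc2 := Hgr xs y'. rewrite -/v in Hc1 Hc2.
have I1 : A * dot v (vsub y y') + a * dot v (vsub xs y') = - (A + a) * dot v p - a * dot v r.
{ have -> : A * dot v (vsub y y') + a * dot v (vsub xs y') = dot v (vadd (vscale A (vsub y y')) (vscale a (vsub xs y'))) by rewrite dot_vadd_r !dot_vscale_r.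
  have -> : - (A + a) * dot v p - a * dot v r = dot v (vadd (vscale (-(A+a)) p) (vscale (-a) r)) by rewrite dot_vadd_r !dot_vscale_r; ring.
  rewrite (dot_sym v) (dot_sym v (vadd _ _)); apply: dot_ext => i; rewrite /p /r /vadd /vscale /vsub; field; lra. }
have Er : r = vsub q w by apply: functional_extensionality => i; rewrite /r /q /w /vsub; ring.
have Ew : w = vsub e (vscale a v) by apply: functional_extensionality => i; rewrite /e /w /vsub /vscale; ring.
clearbody v p q e r w.
have Hr2 : dot r r = dot q q - 2 * dot q w + dot w w
  by rewrite Er !dot_vsub_l !dot_vsub_r (dot_sym w q); ring.
have Hvr : dot v r = dot v q - dot v w by rewrite Er dot_vsub_r.
have Hqw : dot q w = dot q e - a * dot q v by rewrite Ew dot_vsub_r dot_vscale_r.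
have Hpos : 0 <= dot w w + 2 * a * dot v w + a ^ 2 * dot v v.
  have := dot_ge0 (vadd w (vscale a v)).
  rewrite !dot_vadd_l !dot_vadd_r !dot_vscale_l !dot_vscale_r (dot_sym w v); nra.
have Hsq : dot (vadd (vscale lam v) p) (vadd (vscale lam v) p) = lam ^ 2 * dot v v + 2 * lam * dot v p + dot p p
  by rewrite !dot_vadd_l !dot_vadd_r !dot_vscale_l !dot_vscale_r (dot_sym p v); ring.
have E1sq : dot (vadd (vscale lam v) p) (vadd (vscale lam v) p) <= (sigma * vnorm p + lam * delta) ^ 2.
  rewrite -vnorm_sq; apply: pow_incr; split => //; exact: vnorm_ge0.
have Hpp : dot p p = vnorm p ^ 2 by rewrite vnorm_sq.
have Hqe : dot q e <= vnorm q * (a * delta).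
  apply: Rle_trans (CS q e) _; apply: Rmult_le_compat_l => //; exact: vnorm_ge0.
set s := vnorm p in E1sq Hpp *.
set K := (A + a) / (2 * lam).
have HK : 0 < K by rewrite /K; apply: Rdiv_lt_0_compat; lra.
have HVP : (A + a) * dot v p + a ^ 2 / 2 * dot v v = K * (2 * lam * dot v p + lam ^ 2 * dot v v)
  by rewrite -Hrel /K; field; lra.
have Hst : 2 * lam * dot v p + lam ^ 2 * dot v v <= (sigma * s + lam * delta) ^ 2 - s ^ 2 by lra.
have Hscal : (sigma * s + lam * delta) ^ 2 - s ^ 2 <= - (1 - sigma) * s ^ 2 + lam ^ 2 * delta ^ 2 / (1 - sigma).
  have -> : - (1 - sigma) * s ^ 2 + lam ^ 2 * delta ^ 2 / (1 - sigma) =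
     (sigma * s + lam * delta) ^ 2 - s ^ 2 + sigma / (1 - sigma) * (lam * delta - (1 - sigma) * s) ^ 2
    by field; lra.
  have : 0 <= sigma / (1 - sigma) * (lam * delta - (1 - sigma) * s) ^ 2.
    apply: Rmult_le_pos; last by apply: pow2_ge_0.
    apply: Rmult_le_pos; first lra; apply: Rlt_le; apply: Rinv_0_lt_compat; lra.
  lra.
have HK2 : K * (2 * lam * dot v p + lam ^ 2 * dot v v) <= K * (- (1 - sigma) * s ^ 2 + lam ^ 2 * delta ^ 2 / (1 - sigma)).
  apply: Rmult_le_compat_l; lra.
have HK3 : K * (- (1 - sigma) * s ^ 2 + lam ^ 2 * delta ^ 2 / (1 - sigma)) =
   - ((1 - sigma) * (A + a) / (2 * lam) * s ^ 2) + delta ^ 2 / (2 * (1 - sigma)) * a ^ 2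
  by rewrite -Hrel /K; field; lra.
have C : (A + a) * g y' - A * g y - a * g xs <= - (A * dot v (vsub y y') + a * dot v (vsub xs y')) by nra.
rewrite !vnorm_sq -/q -/r (dot_sym q v) in Hqw *.
have Hqe' : dot q e <= delta * (a * vnorm q) by lra.
clear E1 E2 Hc1 Hc2.
nra.
Qed.

Lemma sum1_S f k : sum1 f k.+1 = sum1 f k + f k.+1.
Proof. by []. Qed.

Lemma sum1_le f h k : (forall i, (1 <= i <= k)%nat -> f i <= h i) -> sum1 f k <= sum1 h k.
Proof.
elim: k => [|k IH] H /=; first lra.
have := IH (fun i Hi => H i ltac:(lia)); have := H k.+1 ltac:(lia); lra.
Qed.

Lemma sum1_ge0 f k : (forall i, (1 <= i <= k)%nat -> 0 <= f i) -> 0 <= sum1 f k.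
Proof.
elim: k => [|k IH] H /=; first lra.
have := IH (fun i Hi => H i ltac:(lia)); have := H k.+1 ltac:(lia); lra.
Qed.

Lemma sum1_scale c f k : sum1 (fun i => c * f i) k = c * sum1 f k.
Proof. elim: k => [|k IH] /=; [ring | rewrite IH; ring]. Qed.

Lemma sum1_acca lam k : sum1 (acca lam) k = accA lam k.
Proof. elim: k => [|k IH] //=. by rewrite IH. Qed.

Lemma delta_S d sigma delta lam (x : nat -> vec d) xs k :
  delta_k sigma delta lam x xs k.+1 = delta_k sigma delta lam x xs k
   + delta * (acca lam k.+1 * vnorm (vsub (x k.+1) xs))
   + delta ^ 2 / (2 * (1 - sigma)) * acca lam k.+1 ^ 2.
Proof. rewrite /delta_k !sum1_S; ring. Qed.

Theorem mainTheorem12 (d : nat) (g : vec d -> R) (G : vec d -> vec d)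
    (sigma delta : R) (K : nat) (lam : nat -> R) (x y : nat -> vec d)
    (xs : vec d) :
  convex g -> is_gradient g G ->
  (forall u : vec d, g xs <= g u) ->
  generated g G sigma delta K lam x y ->
  (forall c : R, 0 <= c ->
     delta <= c * sqrt (1 - sigma) * vnorm xs / accA lam K ->
     (forall k, (1 <= k <= K)%nat ->
        delta_k sigma delta lam x xs k <= c * (1 + 3 * c) * vnorm xs ^ 2) /\
     (c <= 1 / 4 ->
      forall k, (1 <= k <= K)%nat ->
        accA lam k * (g (y k) - g xs) + 1 / 2 * vnorm (vsub (x k) xs) ^ 2
        + sum1 (fun i => (1 - sigma) * accA lam i / (2 * lam i)
                         * vnorm (vsub (y i) (xtilde lam x y (i - 1)%nat)) ^ 2) k
        <= vnorm xs ^ 2)) /\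
  (delta <= vnorm xs / (4 * sqrt 2 / sqrt (1 - sigma) * accA lam K) ->
     forall k, (1 <= k <= K)%nat ->
       vnorm (vsub (x k) xs) <= 2 * vnorm xs /\
       (forall eps : R, 0 < eps ->
          g (y k) <= g xs + eps \/ accA lam k <= vnorm xs ^ 2 / eps)).
Proof.
move=> Hconv Hgrad Hmin Hgen.
have Hgr := @grad_ineq d g G Hconv Hgrad.
case: Hgen => Hs0 [Hs1 [Hd [HK1 [Hlam [Hx0 [Hy0 Hst]]]]]].
have HX : 0 <= vnorm xs by exact: vnorm_ge0.
have Aa0 : forall k, (k < K)%nat -> 0 <= accA lam k ->
   0 < acca lam k.+1 /\ lam k.+1 * (accA lam k + acca lam k.+1) = acca lam k.+1 ^ 2.
  move=> k Hk HA.
  have Hl : 0 < lam k.+1 by apply: Hlam; lia.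
  rewrite /acca.
  have Hq : 0 <= lam k.+1 ^ 2 + 4 * lam k.+1 * accA lam k by nra.
  have Hs := sqrt_sqrt _ Hq. have Hp := sqrt_pos (lam k.+1 ^ 2 + 4 * lam k.+1 * accA lam k).
  split; nra.
have A_ge0 : forall k, (k <= K)%nat -> 0 <= accA lam k.
  elim => [|k IH] Hk; first by rewrite /=; lra.
  have Hk' : (k < K)%nat by lia.
  have HA := IH (ltnW Hk').
  have [Ha _] := Aa0 k Hk' HA.
  change (0 <= accA lam k + acca lam k.+1); lra.
have a_pos : forall k, (1 <= k <= K)%nat -> 0 < acca lam k.
  case => [|k] Hk; first lia.
  have Hk' : (k < K)%nat by lia.
  exact: (Aa0 k Hk' (A_ge0 k (ltnW Hk'))).1.
have A_mono : forall n, (n <= K)%nat -> forall k, (k <= n)%nat -> accA lam k <= accA lam n.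
  elim => [|n IH] Hn k Hk.
  - have -> : k = 0%nat by lia. lra.
  - case: (leqP k n) => Hkn.
    + have := IH (ltnW Hn) k Hkn.
      have := a_pos n.+1 ltac:(lia).
      change (accA lam n.+1) with (accA lam n + acca lam n.+1); lra.
    + have -> : k = n.+1 by lia. lra.
have HAK : 0 < accA lam K.
  have := A_mono K (leqnn K) 1%nat HK1.
  have := a_pos 1%nat ltac:(lia).
  change (accA lam 1) with (accA lam 0 + acca lam 1); rewrite /=; lra.
have Tnn : forall k, (k <= K)%nat ->
  0 <= sum1 (fun i => (1 - sigma) * accA lam i / (2 * lam i)
                         * vnorm (vsub (y i) (xtilde lam x y (i - 1)%nat)) ^ 2) k.
  move=> k Hk; apply: sum1_ge0 => i Hi.
  have Hl : 0 < lam i by apply: Hlam; lia.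
  have HA := A_ge0 i ltac:(lia).
  apply: Rmult_le_pos; last by apply: pow2_ge_0.
  apply: Rmult_le_pos; first nra.
  apply: Rlt_le; apply: Rinv_0_lt_compat; lra.
have Gnn : forall k, (k <= K)%nat -> 0 <= accA lam k * (g (y k) - g xs).
  move=> k Hk; apply: Rmult_le_pos; first exact: A_ge0.
  have := Hmin (y k); lra.
have Energy : forall k, (k <= K)%nat ->
  accA lam k * (g (y k) - g xs) + 1 / 2 * vnorm (vsub (x k) xs) ^ 2
  + sum1 (fun i => (1 - sigma) * accA lam i / (2 * lam i)
                   * vnorm (vsub (y i) (xtilde lam x y (i - 1)%nat)) ^ 2) k
  <= 1 / 2 * vnorm xs ^ 2 + delta_k sigma delta lam x xs k.
  elim => [|k IH] Hk.
  - rewrite /= Hx0.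
    have -> : vnorm (vsub vzero xs) = vnorm xs.
      rewrite /vnorm; f_equal; rewrite /dot; apply: eq_bigr => i _; rewrite /vsub /vzero; ring.
    rewrite /delta_k /=; lra.
  - have Hk' : (k < K)%nat by lia.
    have IH' := IH (ltnW Hk').
    have HA := A_ge0 k (ltnW Hk').
    have [Ha Hrel] := Aa0 k Hk' HA.
    have Hl : 0 < lam k.+1 by apply: Hlam; lia.
    case: (Hst k Hk') => E1 E2.
    have S : accA lam k.+1 * (g (y k.+1) - g xs) + 1 / 2 * vnorm (vsub (x k.+1) xs) ^ 2
       + (1 - sigma) * accA lam k.+1 / (2 * lam k.+1) * vnorm (vsub (y k.+1) (xtilde lam x y k)) ^ 2
       <= accA lam k * (g (y k) - g xs) + 1 / 2 * vnorm (vsub (x k) xs) ^ 2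
       + delta * (acca lam k.+1 * vnorm (vsub (x k.+1) xs))
       + delta ^ 2 / (2 * (1 - sigma)) * acca lam k.+1 ^ 2
      := @step d g G sigma delta _ _ _ _ _ _ _ xs Hgr Hs0 Hs1 Hd HA Hl Ha Hrel E1 E2.
    rewrite sum1_S delta_S.
    have -> : (k.+1 - 1 = k)%nat by rewrite subn1.
    lra.
have Rk : forall k, (k <= K)%nat ->
    vnorm (vsub (x k) xs) ^ 2 <= vnorm xs ^ 2 + 2 * delta_k sigma delta lam x xs k.
  move=> k Hk; have := Energy k Hk; have := Tnn k Hk; have := Gnn k Hk; lra.
have Hsq_sum : forall k, (k <= K)%nat -> sum1 (fun i => acca lam i ^ 2) k <= accA lam k ^ 2.
  elim => [|k IH] Hk; first by rewrite /=; lra.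
  have Hk' : (k < K)%nat by lia.
  have := IH (ltnW Hk'); have := A_ge0 k (ltnW Hk'); have := a_pos k.+1 ltac:(lia).
  rewrite sum1_S; change (accA lam k.+1) with (accA lam k + acca lam k.+1); nra.
have P12 : forall c : R, 0 <= c ->
     delta <= c * sqrt (1 - sigma) * vnorm xs / accA lam K ->
     (forall k, (1 <= k <= K)%nat ->
        delta_k sigma delta lam x xs k <= c * (1 + 3 * c) * vnorm xs ^ 2) /\
     (c <= 1 / 4 ->
      forall k, (1 <= k <= K)%nat ->
        accA lam k * (g (y k) - g xs) + 1 / 2 * vnorm (vsub (x k) xs) ^ 2
        + sum1 (fun i => (1 - sigma) * accA lam i / (2 * lam i)
                         * vnorm (vsub (y i) (xtilde lam x y (i - 1)%nat)) ^ 2) k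
        <= vnorm xs ^ 2).
  move=> c Hc0 Hdel.
  set X := vnorm xs in HX Hdel Rk Energy *.
  have Hs1' : 0 <= sqrt (1 - sigma) <= 1.
    split; first exact: sqrt_pos.
    apply: Rle_trans (sqrt_le_1_alt _ 1 _) (Req_le _ _ sqrt_1); lra.
  have Hss : sqrt (1 - sigma) ^ 2 = 1 - sigma by apply: pow2_sqrt; lra.
  have Hd1 : delta * accA lam K <= c * sqrt (1 - sigma) * X.
    have := Rmult_le_compat_r _ _ _ (Rlt_le _ _ HAK) Hdel.
    have -> : c * sqrt (1 - sigma) * X / accA lam K * accA lam K = c * sqrt (1 - sigma) * X
      by field; lra.
    done.
  have Hd2 : delta * accA lam K <= c * X.
    have : c * sqrt (1 - sigma) * X <= c * X.
      have := Rmult_le_pos _ _ Hc0 HX; nra.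
    lra.
  have Hd3 : (delta * accA lam K) ^ 2 <= c ^ 2 * (1 - sigma) * X ^ 2.
    have -> : c ^ 2 * (1 - sigma) * X ^ 2 = (c * sqrt (1 - sigma) * X) ^ 2 by rewrite Rpow_mult_distr Rpow_mult_distr Hss.
    apply: pow_incr; split => //; apply: Rmult_le_pos => //; exact: Rlt_le.
  have HQ : forall k, (k <= K)%nat ->
      delta ^ 2 / (2 * (1 - sigma)) * sum1 (fun i => acca lam i ^ 2) k <= c ^ 2 * X ^ 2 / 2.
    move=> k Hk.
    have H1 := Hsq_sum k Hk.
    have H2 := A_mono K (leqnn K) k Hk.
    have H3 := A_ge0 k Hk.
    have H4 : sum1 (fun i => acca lam i ^ 2) k <= accA lam K ^ 2 by nra.
    have H5 : delta ^ 2 * sum1 (fun i => acca lam i ^ 2) k <= c ^ 2 * (1 - sigma) * X ^ 2.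
      have := pow2_ge_0 delta; nra.
    have -> : delta ^ 2 / (2 * (1 - sigma)) * sum1 (fun i => acca lam i ^ 2) k
      = (delta ^ 2 * sum1 (fun i => acca lam i ^ 2) k) / (2 * (1 - sigma)) by field; lra.
    apply/(Rmult_le_reg_r (2 * (1 - sigma))); first lra.
    have -> : delta ^ 2 * sum1 (fun i => acca lam i ^ 2) k / (2 * (1 - sigma)) * (2 * (1 - sigma))
      = delta ^ 2 * sum1 (fun i => acca lam i ^ 2) k by field; lra.
    nra.
  set B := X * (1 + 5 / 2 * c).
  have HB : 0 <= B by rewrite /B; nra.
  have Hsum : forall k, (k <= K)%nat -> (forall i, (1 <= i <= k)%nat -> vnorm (vsub (x i) xs) <= B) ->
      sum1 (fun i => acca lam i * vnorm (vsub (x i) xs)) k <= B * accA lam k.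
    move=> k Hk Hi.
    rewrite -sum1_acca -sum1_scale; apply: sum1_le => i Hik.
    have := a_pos i ltac:(lia); have := Hi i Hik; nra.
  have Rb : forall k, (k <= K)%nat -> forall i, (1 <= i <= k)%nat -> vnorm (vsub (x i) xs) <= B.
    elim => [|k IH] Hk i Hi; first lia.
    case: (leqP i k) => Hik; first by apply: IH; lia.
    have -> : i = k.+1 by lia.
    have Hk' : (k < K)%nat by lia.
    have Hr := Rk k.+1 Hk.
    rewrite delta_S /delta_k in Hr.
    have Hs := Hsum k (ltnW Hk') (fun j Hj => IH (ltnW Hk') j Hj).
    have HQ' := HQ k.+1 Hk.
    rewrite sum1_S in HQ'.
    have Hm := A_mono K (leqnn K) k.+1 Hk.
    change (accA lam k.+1) with (accA lam k + acca lam k.+1) in Hm.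
    have HA := A_ge0 k (ltnW Hk'). have Ha := a_pos k.+1 ltac:(lia).
    set r := vnorm (vsub (x k.+1) xs) in Hr *.
    have Hr0 : 0 <= r by exact: vnorm_ge0.
    set S := sum1 (fun i => acca lam i * vnorm (vsub (x i) xs)) k in Hr Hs.
    set D := delta * accA lam k.
    set E := delta * acca lam k.+1.
    have HD : 0 <= D by rewrite /D; nra.
    have HE : 0 <= E by rewrite /E; nra.
    have HDE : D + E <= c * X by rewrite /D /E; nra.
    have HdS : delta * S <= D * B by rewrite /D; nra.
    have Hr' : r ^ 2 <= X ^ 2 + 2 * (D * B) + 2 * (E * r) + c ^ 2 * X ^ 2.
      rewrite /E; nra.
    case: (Rle_lt_dec r B) => // HrB; exfalso.
    have H1 : D * B <= D * r by nra.
    have H2 : r ^ 2 <= (1 + c ^ 2) * X ^ 2 + 2 * (c * X) * r by nra.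
    have H3 : B ^ 2 - 2 * c * X * B - (1 + c ^ 2) * X ^ 2 = X ^ 2 * (3 * c + c ^ 2 / 4)
      by rewrite /B; field.
    have H4 : 0 <= X ^ 2 * (3 * c + c ^ 2 / 4) by apply: Rmult_le_pos; nra.
    have H5 : 2 * c * X <= B by rewrite /B; nra.
    have H6 : (r - B) * (r + B - 2 * c * X) <= 0 by nra.
    have H7 : 0 < (r - B) * (r + B - 2 * c * X) by apply: Rmult_lt_0_compat; lra.
    lra.
  have Part1 : forall k, (1 <= k <= K)%nat ->
      delta_k sigma delta lam x xs k <= c * (1 + 3 * c) * X ^ 2.
    move=> k Hk.
    have Hk' : (k <= K)%nat by lia.
    have Hs := Hsum k Hk' (fun j Hj => Rb k Hk' j Hj).
    have HQ' := HQ k Hk'.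
    have Hm := A_mono K (leqnn K) k Hk'.
    have HA := A_ge0 k Hk'.
    rewrite /delta_k.
    have : delta * sum1 (fun i => acca lam i * vnorm (vsub (x i) xs)) k <= B * (c * X).
      have : delta * accA lam k <= c * X by nra.
      nra.
    rewrite /B; nra.
  split => // Hc4 k Hk.
  have := Energy k ltac:(lia); have := Part1 k Hk.
  have : c * (1 + 3 * c) <= 1 / 2 by nra.
  have := pow2_ge_0 X; nra.
split; first exact: P12.
move=> Hdel k Hk.
have Hs2 : 1 <= sqrt 2 by apply: Rle_trans (Req_le _ _ (esym sqrt_1)) (sqrt_le_1_alt 1 _ _); lra.
have Hsp : 0 < sqrt (1 - sigma) by apply: sqrt_lt_R0; lra.
have Hc0 : 0 <= / (4 * sqrt 2) by apply: Rlt_le; apply: Rinv_0_lt_compat; lra.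
have Hdel' : delta <= / (4 * sqrt 2) * sqrt (1 - sigma) * vnorm xs / accA lam K.
  have -> : / (4 * sqrt 2) * sqrt (1 - sigma) * vnorm xs / accA lam K
     = vnorm xs / (4 * sqrt 2 / sqrt (1 - sigma) * accA lam K) by field; lra.
  done.
have [_ P2] := P12 _ Hc0 Hdel'.
have Hc4 : / (4 * sqrt 2) <= 1 / 4.
  rewrite /Rdiv Rmult_1_l; apply: Rinv_le_contravar; lra.
have HE := P2 Hc4 k Hk.
have Hk' : (k <= K)%nat by lia.
have HT := Tnn k Hk'. have HG := Gnn k Hk'.
have HA := A_ge0 k Hk'.
have Hr0 := vnorm_ge0 (vsub (x k) xs).
split.
- have : vnorm (vsub (x k) xs) ^ 2 <= (2 * vnorm xs) ^ 2 by nra.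
  move=> H; apply: Rsqr_incr_0_var; rewrite /Rsqr; nra.
- move=> eps Heps.
  case: (Rle_lt_dec (g (y k)) (g xs + eps)) => Hge; [by left | right].
  have H1 : accA lam k * eps <= vnorm xs ^ 2 by nra.
  apply/(Rmult_le_reg_r eps) => //.
  have -> : vnorm xs ^ 2 / eps * eps = vnorm xs ^ 2 by field; lra.
  done.
Qed.
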